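(* There is a universal constant $c>0$ such that for every $m\ge2$, every $T\ge K\ge4$ (with $m\le K$), and every multi-dueling bandit algorithm, there exists an oblivious sequence of preference matrices $P_1,\dots,P_T$ on $[K]$ with a common Condorcet winner $a^\star$ (i.e. $P_t(a^\star,i)\ge1/2$ for all $i,t$) such that $\mathbb{E}[R_T^{\mathrm C}]\ge c\sqrt{KT}$.
   Context: A preference matrix on $[K]$ is $P\in[0,1]^{K\times K}$ with $P(i,j)+P(j,i)=1$, $P(i,i)=1/2$. Multi-dueling bandit protocol: at each round $t\in[T]$ the learner, based on past observations and internal randomness, selects a multiset $\mathcal{A}_t\subseteq[K]$ of size $m$ (elements listed $\mathcal{A}_t(1),\dots,\mathcal{A}_t(m)$) and observes only a winning index $I_t\in[m]$ drawn with probability $\Pr[I_t=i]=\sum_{j\ne i}\frac{2P_t(\mathcal{A}_t(i),\mathcal{A}_t(j))}{m(m-1)}$. Oblivious means the sequence $P_1,\dots,P_T$ is fixed in advance. Condorcet regret: $R_T^{\mathrm C}=\sum_{t=1}^T\frac1m\sum_{j=1}^m\Delta_t(\mathcal{A}_t(j))$ with $\Delta_t(i)=P_t(a^\star,i)-\tfrac12$. *)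

(* Defs.v *)
From HB Require Import structures.
From mathcomp Require Import all_boot all_order all_algebra.
From mathcomp Require Import Rstruct.
Set Implicit Arguments. Unset Strict Implicit. Unset Printing Implicit Defensive.
Import Order.TTheory GRing.Theory Num.Theory.
Local Open Scope ring_scope.

Notation R := Rdefinitions.R.

Definition pref (K : nat) := 'I_K -> 'I_K -> R.

Definition is_pref_matrix (K : nat) (P : pref K) : Prop :=
  (forall i j, 0 <= P i j <= 1) /\
  (forall i j, P i j + P j i = 1) /\
  (forall i, P i i = 1 / 2%:R).

(* An action: a multiset of size m, listed as A(1),...,A(m). *)
Definition action (m K : nat) := {ffun 'I_m -> 'I_K}.

Definition win_prob (m K : nat) (P : pref K) (A : action m K) (i : 'I_m) : R :=
  \sum_(j < m | j != i) (2%:R * P (A i) (A j)) / (m * (m - 1))%:R.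

Definition history (m K : nat) := seq (action m K * 'I_m)%type.

(* A (randomized) algorithm, as a behavioral strategy: after history h it picks
   the next multiset according to the distribution (policy h). *)
Definition policy (m K : nat) := history m K -> {ffun action m K -> R}.

Definition is_distribution (X : finType) (d : {ffun X -> R}) : Prop :=
  (forall x, 0 <= d x) /\ \sum_x d x = 1.

Definition valid_policy (m K : nat) (pol : policy m K) : Prop :=
  forall h, is_distribution (pol h).

Definition trajectory (m K T : nat) := {ffun 'I_T -> (action m K * 'I_m)%type}.

Definition prefix (m K T : nat) (tr : trajectory m K T) (t : 'I_T) : history m K :=
  [seq tr s | s : 'I_T <- enum 'I_T & ltn s t].

Definition traj_prob (m K T : nat) (pol : policy m K) (Ps : 'I_T -> pref K)
    (tr : trajectory m K T) : R :=
  \prod_(t < T) (pol (prefix tr t) (tr t).1 * win_prob (Ps t) (tr t).1 (tr t).2).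

Definition condorcet_regret (m K T : nat) (Ps : 'I_T -> pref K) (astar : 'I_K)
    (tr : trajectory m K T) : R :=
  \sum_(t < T) (1 / m%:R) * \sum_(j < m) (Ps t astar ((tr t).1 j) - 1 / 2%:R).

Definition expected_regret (m K T : nat) (pol : policy m K) (Ps : 'I_T -> pref K)
    (astar : 'I_K) : R :=
  \sum_(tr : trajectory m K T) traj_prob pol Ps tr * condorcet_regret Ps astar tr.

(* Main.v *)
Require Import Defs.
From Stdlib Require Import Reals.
From HB Require Import structures.
From mathcomp Require Import all_boot all_order all_algebra.
From mathcomp Require Import Rstruct.
From mathcomp Require Import ring lra.
Set Implicit Arguments. Unset Strict Implicit. Unset Printing Implicit Defensive.
Import Order.TTheory GRing.Theory Num.Theory.
Local Open Scope ring_scope.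

Lemma ln_le_sub1 (y : R) : 0 < y -> ln y <= y - 1.
Proof.
move=> /RltP hy.
have /RleP := exp_ineq1_le (ln y). rewrite exp_ln // RplusE. rewrite R1E. lra.
Qed.

Lemma ln_mulR (x y : R) : 0 < x -> 0 < y -> ln (x * y) = ln x + ln y.
Proof. by move=> /RltP hx /RltP hy; rewrite ln_mult. Qed.

Lemma ln_invR (x : R) : 0 < x -> ln (x^-1) = - ln x.
Proof. by move=> /RltP hx; rewrite -RinvE ln_Rinv. Qed.

Lemma ln_ge (y : R) : 0 < y -> 1 - y^-1 <= ln y.
Proof.
move=> hy; have hi : 0 < y^-1 by rewrite invr_gt0.
have := ln_le_sub1 hi; rewrite ln_invR //; lra.
Qed.

Lemma ln_1R : ln 1 = 0.
Proof. exact: ln_1. Qed.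

Lemma ln_prod (I : finType) (F : I -> R) : (forall i, 0 < F i) ->
  ln (\prod_i F i) = \sum_i ln (F i).
Proof.
move=> hF.
suff [] : 0 < \prod_i F i /\ ln (\prod_i F i) = \sum_i ln (F i) by [].
apply: (big_ind2 (fun x s => 0 < x /\ ln x = s)).
- by rewrite ln_1R.
- move=> x1 x2 y1 y2 [h1 e1] [h2 e2]; split; first exact: mulr_gt0.
  by rewrite ln_mulR // e1 e2.
- by move=> i; split.
Qed.
Section Traj.
Variables (m K : nat).
Local Notation X := (action m K * 'I_m)%type.

Definition ext T (tr : trajectory m K T) (x : X) : trajectory m K T.+1 :=
  [ffun s : 'I_T.+1 => if unlift ord_max s is Some s' then tr s' else x].

Definition restr T (tr : trajectory m K T.+1) : trajectory m K T :=
  [ffun s => tr (widen_ord (leqnSn T) s)].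

Lemma widen_lift T (s : 'I_T) : widen_ord (leqnSn T) s = lift ord_max s.
Proof. by apply: val_inj; rewrite /= /bump leqNgt ltn_ord. Qed.

Lemma ext_widen T (tr : trajectory m K T) x s : ext tr x (widen_ord (leqnSn T) s) = tr s.
Proof. by rewrite ffunE widen_lift liftK. Qed.

Lemma ext_max T (tr : trajectory m K T) x : ext tr x ord_max = x.
Proof. by rewrite ffunE unlift_none. Qed.

Lemma sum_split T (F : trajectory m K T.+1 -> R) :
  \sum_tr F tr = \sum_(tr : trajectory m K T) \sum_(x : X) F (ext tr x).
Proof.
rewrite pair_big /= (reindex (fun p : trajectory m K T * X => ext p.1 p.2)) //.
exists (fun tr => (restr tr, tr ord_max)) => [[tr x] _|tr _] /=.
  congr pair; last exact: ext_max.
  by apply/ffunP => s; rewrite ffunE ext_widen.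
apply/ffunP => s; rewrite ffunE; case: unliftP => [s' ->|->] //.
by rewrite ffunE widen_lift.
Qed.

Definition hist T (tr : trajectory m K T) : history m K := [seq tr s | s <- enum 'I_T].

Lemma enum_below n t : (t <= n)%N ->
  map (@nat_of_ord n) [seq s : 'I_n <- enum 'I_n | ltn s t] = iota 0 t.
Proof.
move=> le.
have -> : map (@nat_of_ord n) [seq s : 'I_n <- enum 'I_n | ltn s t] = [seq k <- map val (enum 'I_n) | ltn k t] by rewrite filter_map.
rewrite val_enum_ord -(subnKC le) iotaD filter_cat.
rewrite (@eq_in_filter _ _ predT) ?filter_predT; last by move=> k; rewrite mem_iota.
rewrite (@eq_in_filter _ _ pred0) ?filter_pred0 ?cats0 //.
by move=> k; rewrite mem_iota /= add0n => /andP[]; rewrite leqNgt => /negbTE.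
Qed.

Lemma prefix_ext_widen T (tr : trajectory m K T) x s :
  Defs.prefix (ext tr x) (widen_ord (leqnSn T) s) = Defs.prefix tr s.
Proof.
rewrite /Defs.prefix.
have -> : [seq u : 'I_T.+1 <- enum 'I_T.+1 | ltn u (widen_ord (leqnSn T) s)] =
          map (widen_ord (leqnSn T)) [seq u : 'I_T <- enum 'I_T | ltn u s].
  apply: (inj_map val_inj); rewrite -map_comp /=.
  have e : forall l : seq 'I_T, map (@nat_of_ord T.+1 \o widen_ord (leqnSn T)) l = map val l by move=> l; apply: eq_map.
  have hs : (s <= T)%N := ltnW (ltn_ord s).
  have hs' : (s <= T.+1)%N := leq_trans hs (leqnSn T).
  by rewrite e (enum_below hs) (enum_below hs').
by rewrite -map_comp; apply: eq_map => u /=; rewrite ext_widen.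
Qed.

Lemma prefix_ext_max T (tr : trajectory m K T) x :
  Defs.prefix (ext tr x) ord_max = hist tr.
Proof.
rewrite /Defs.prefix /hist.
have -> : [seq u : 'I_T.+1 <- enum 'I_T.+1 | ltn u (@ord_max T)] =
          map (widen_ord (leqnSn T)) (enum 'I_T).
  apply: (inj_map val_inj); rewrite -map_comp /=.
  have e : forall l : seq 'I_T, map (@nat_of_ord T.+1 \o widen_ord (leqnSn T)) l = map val l by move=> l; apply: eq_map.
  by rewrite e enum_below // val_enum_ord.
by rewrite -map_comp; apply: eq_map => u /=; rewrite ext_widen.
Qed.

Lemma traj_prob_ext T (pol : policy m K) (Ps : 'I_T.+1 -> pref K) (tr : trajectory m K T) x :
  traj_prob pol Ps (ext tr x) =
  traj_prob pol (fun s => Ps (widen_ord (leqnSn T) s)) tr *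
  (pol (hist tr) x.1 * win_prob (Ps ord_max) x.1 x.2).
Proof.
rewrite /traj_prob big_ord_recr /= prefix_ext_max ext_max; congr (_ * _).
by apply: eq_bigr => s _; rewrite prefix_ext_widen ext_widen.
Qed.


Lemma sumX (F : action m K -> 'I_m -> R) :
  \sum_(x : X) F x.1 x.2 = \sum_a \sum_i F a i.
Proof. by rewrite pair_bigA. Qed.

Variable pol : policy m K.
Hypothesis hpol : valid_policy pol.

Lemma csum (h : history m K) (Pp : pref K) :
  (forall a : action m K, \sum_i win_prob Pp a i = 1) ->
  \sum_(x : X) pol h x.1 * win_prob Pp x.1 x.2 = 1.
Proof.
move=> hw; rewrite (sumX (fun (a : action m K) (i : 'I_m) => pol h a * win_prob Pp a i)).
rewrite -(proj2 (hpol h)); apply: eq_bigr => a _.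
by rewrite -big_distrr /= hw mulr1.
Qed.

Lemma cG (h : history m K) (Pp : pref K) (G : action m K -> 'I_m -> R) :
  (forall a : action m K, \sum_i win_prob Pp a i = 1) ->
  \sum_(x : X) pol h x.1 * win_prob Pp x.1 x.2 * (\sum_i win_prob Pp x.1 i * G x.1 i) =
  \sum_(x : X) pol h x.1 * win_prob Pp x.1 x.2 * G x.1 x.2.
Proof.
move=> hw.
rewrite (sumX (fun (a : action m K) (i : 'I_m) => pol h a * win_prob Pp a i * (\sum_i win_prob Pp a i * G a i))).
rewrite (sumX (fun (a : action m K) (i : 'I_m) => pol h a * win_prob Pp a i * G a i)).
apply: eq_bigr => a _.
rewrite -big_distrl /= -big_distrr /= hw mulr1 big_distrr /=.
by apply: eq_bigr => i _; rewrite mulrA.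
Qed.

Lemma split_lin (a S : R) (c g : X -> R) :
  \sum_x (a * c x) * (S + g x) = a * S * \sum_x c x + a * \sum_x c x * g x.
Proof.
rewrite !big_distrr -big_split; apply: eq_bigr => x _ /=; ring.
Qed.

Lemma traj_sum1 T (Ps : 'I_T -> pref K) :
  (forall t (a : action m K), \sum_i win_prob (Ps t) a i = 1) ->
  \sum_tr traj_prob pol Ps tr = 1.
Proof.
elim: T Ps => [|T IH] Ps hw.
  rewrite (eq_bigr (fun _ => 1)); last by move=> tr _; rewrite /traj_prob big_ord0.
  by rewrite sumr_const card_ffun card_ord expn0.
rewrite sum_split -(IH (fun s => Ps (widen_ord (leqnSn T) s))); last by move=> t a; exact: hw.
apply: eq_bigr => tr _.
rewrite (eq_bigr (fun x => traj_prob pol (fun s => Ps (widen_ord (leqnSn T) s)) tr *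
  (pol (hist tr) x.1 * win_prob (Ps ord_max) x.1 x.2))); last by move=> x _; rewrite traj_prob_ext.
by rewrite -big_distrr /= csum ?mulr1.
Qed.

Lemma tower T (Ps : 'I_T -> pref K) (G : action m K -> 'I_m -> R) :
  (forall t (a : action m K), \sum_i win_prob (Ps t) a i = 1) ->
  \sum_tr traj_prob pol Ps tr * \sum_t G (tr t).1 (tr t).2 =
  \sum_tr traj_prob pol Ps tr * \sum_t \sum_i win_prob (Ps t) (tr t).1 i * G (tr t).1 i.
Proof.
elim: T Ps => [|T IH] Ps hw.
  by apply: eq_bigr => tr _; rewrite !big_ord0.
have hw' : forall t (a : action m K), \sum_i win_prob (Ps (widen_ord (leqnSn T) t)) a i = 1 by move=> t a; exact: hw.
rewrite !sum_split.
have e1 : forall tr : trajectory m K T, \sum_(x : X)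
   traj_prob pol Ps (ext tr x) * \sum_t G (ext tr x t).1 (ext tr x t).2 =
   traj_prob pol (fun s => Ps (widen_ord (leqnSn T) s)) tr * \sum_t G (tr t).1 (tr t).2 +
   traj_prob pol (fun s => Ps (widen_ord (leqnSn T) s)) tr *
     \sum_(x : X) pol (hist tr) x.1 * win_prob (Ps ord_max) x.1 x.2 * G x.1 x.2.
  move=> tr.
  rewrite (eq_bigr (fun x => (traj_prob pol (fun s => Ps (widen_ord (leqnSn T) s)) tr *
      (pol (hist tr) x.1 * win_prob (Ps ord_max) x.1 x.2)) * (\sum_t G (tr t).1 (tr t).2 + G x.1 x.2))).
    by rewrite split_lin csum // mulr1.
  move=> x _; rewrite traj_prob_ext big_ord_recr /= ext_max; congr (_ * (_ + _)).
  by apply: eq_bigr => s _; rewrite ext_widen.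
have e2 : forall tr : trajectory m K T, \sum_(x : X)
   traj_prob pol Ps (ext tr x) * \sum_t \sum_i win_prob (Ps t) (ext tr x t).1 i * G (ext tr x t).1 i =
   traj_prob pol (fun s => Ps (widen_ord (leqnSn T) s)) tr *
     \sum_t \sum_i win_prob (Ps (widen_ord (leqnSn T) t)) (tr t).1 i * G (tr t).1 i +
   traj_prob pol (fun s => Ps (widen_ord (leqnSn T) s)) tr *
     \sum_(x : X) pol (hist tr) x.1 * win_prob (Ps ord_max) x.1 x.2 * G x.1 x.2.
  move=> tr.
  rewrite (eq_bigr (fun x => (traj_prob pol (fun s => Ps (widen_ord (leqnSn T) s)) tr *
      (pol (hist tr) x.1 * win_prob (Ps ord_max) x.1 x.2)) *
      (\sum_t \sum_i win_prob (Ps (widen_ord (leqnSn T) t)) (tr t).1 i * G (tr t).1 i +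
       \sum_i win_prob (Ps ord_max) x.1 i * G x.1 i))).
    rewrite split_lin csum // mulr1; congr (_ + _ * _).
    rewrite -(cG _ _ (hw ord_max)); by apply: eq_bigr.
  move=> x _; rewrite traj_prob_ext big_ord_recr /= ext_max; congr (_ * (_ + _)).
  by apply: eq_bigr => s _; rewrite ext_widen.
rewrite (eq_bigr _ (fun tr _ => e1 tr)) (eq_bigr _ (fun tr _ => e2 tr)) !big_split /=.
by rewrite IH.
Qed.

End Traj.
Definition dI (K : nat) (j i : 'I_K) : R := (i == j)%:R.
Definition Pe (K : nat) (j : 'I_K) (e : R) : pref K :=
  fun i k => 1 / 2%:R + e * (dI j i - dI j k).
Definition cnt (m K : nat) (j : 'I_K) (a : action m K) : R := \sum_s dI j (a s).

Lemma dI01 K (j i : 'I_K) : dI j i = 0 \/ dI j i = 1.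
Proof. by rewrite /dI; case: (i == j); [right|left]. Qed.

Lemma dI_sq K (j i : 'I_K) : dI j i * dI j i = dI j i.
Proof. by case: (dI01 j i) => ->; rewrite ?mulr0 ?mulr1. Qed.

Lemma natm1 (m : nat) : (1 <= m)%N -> ((m * (m - 1))%N%:R : R) = m%:R * (m%:R - 1).
Proof. by move=> hm; rewrite natrM natrB. Qed.

Lemma win_Pe m K (j : 'I_K) e (a : action m K) i : (2 <= m)%N ->
  win_prob (Pe j e) a i =
  m%:R^-1 + 2%:R * e * (m%:R * dI j (a i) - cnt j a) / (m%:R * (m%:R - 1)).
Proof.
move=> hm.
have hm0 : (m%:R : R) != 0 by rewrite pnatr_eq0 -lt0n (leq_trans _ hm).
have hm1 : (m%:R - 1 : R) != 0.
  by rewrite subr_eq0 pnatr_eq1; case: (m) hm => [|[|]].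
rewrite /win_prob natm1 ?(leq_trans _ hm) //.
rewrite -mulr_suml.
have hall : \sum_k 2%:R * Pe j e (a i) (a k) =
   m%:R * (1 + 2%:R * e * dI j (a i)) - 2%:R * e * cnt j a.
  rewrite (eq_bigr (fun k => (1 + 2%:R * e * dI j (a i)) - 2%:R * e * dI j (a k))); last first.
    by move=> k _; rewrite /Pe; field.
  by rewrite sumrB sumr_const card_ord /cnt mulr_sumr [m%:R * _]mulr_natl.
move: hall; rewrite (bigD1 i) //= /Pe subrr mulr0 addr0 => hall.
have -> : \sum_(k < m | k != i) 2%:R * (1 / 2%:R + e * (dI j (a i) - dI j (a k))) =
   m%:R * (1 + 2%:R * e * dI j (a i)) - 2%:R * e * cnt j a - 1.
  by rewrite -hall; field.
by field; rewrite hm0 hm1.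
Qed.

Section Inst.
Variables (m K : nat) (j : 'I_K) (e : R).
Hypothesis hm : (2 <= m)%N.
Local Notation M := (m%:R : R).

Lemma hM0 : M != 0. Proof. by rewrite pnatr_eq0 -lt0n (leq_trans _ hm). Qed.
Lemma hM1 : M - 1 != 0. Proof. by rewrite subr_eq0 pnatr_eq1; case: (m) hm => [|[|]]. Qed.
Lemma hM2 : 2%:R <= M. Proof. by rewrite ler_nat. Qed.

Lemma dI_ge0 (i : 'I_K) : 0 <= dI j i. Proof. by case: (dI01 j i) => ->. Qed.
Lemma dI_le1 (i : 'I_K) : dI j i <= 1. Proof. by case: (dI01 j i) => ->. Qed.

Lemma cnt_ge0 (a : action m K) : 0 <= cnt j a.
Proof. by apply: sumr_ge0 => s _; exact: dI_ge0. Qed.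

Lemma cnt_le (a : action m K) : cnt j a <= M.
Proof.
rewrite /cnt (le_trans (ler_sum _ (fun s _ => dI_le1 (a s)))) //.
by rewrite sumr_const card_ord.
Qed.

Lemma cnt_rest (a : action m K) i : cnt j a - dI j (a i) <= M - 1.
Proof.
rewrite /cnt (bigD1 i) //= addrC addrK.
rewrite (le_trans (ler_sum _ (fun s _ => dI_le1 (a s)))) //.
have h : \sum_(k < m) (1 : R) = M by rewrite sumr_const card_ord.
by rewrite (bigD1 i) //= addrC in h; rewrite -h addrK.
Qed.

Lemma win_sum1 (a : action m K) : \sum_i win_prob (Pe j e) a i = 1.
Proof.
rewrite (eq_bigr _ (fun i _ => win_Pe j e a i hm)) big_split /= sumr_const card_ord.
rewrite (eq_bigr (fun i => 2%:R * e / (M * (M - 1)) * (M * dI j (a i) - cnt j a))); last first.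
  by move=> i _; rewrite mulrAC.
rewrite -mulr_sumr sumrB -mulr_sumr sumr_const card_ord -/(cnt j a).
have -> : cnt j a *+ m = M * cnt j a by rewrite mulr_natl.
have -> : M^-1 *+ m = M * M^-1 by rewrite mulr_natl.
by rewrite subrr mulr0 addr0 mulfV // hM0.
Qed.

Hypothesis he0 : 0 <= e.
Hypothesis he1 : e <= 1 / 4%:R.

Lemma hMgt1 : 1 < M. Proof. by rewrite ltr1n. Qed.

Lemma win_lb (a : action m K) i : (2%:R * M)^-1 <= win_prob (Pe j e) a i.
Proof.
rewrite win_Pe //.
have h0e := he0; have h1e := he1.
have hd := dI_ge0 (a i); have hr := cnt_rest a i.
set d := dI j (a i) in hd hr *; set n := cnt j a in hr *; clearbody d n.
have hM := hMgt1.
have hy : -(M - 1) <= M * d - n.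
  have : 0 <= (M - 1) * d by apply: mulr_ge0 => //; lra.
  lra.
rewrite -subr_ge0.
have -> : M^-1 + 2%:R * e * (M * d - n) / (M * (M - 1)) - (2%:R * M)^-1 =
   ((M - 1) + 4%:R * e * (M * d - n)) / (2%:R * M * (M - 1)).
  by field; rewrite hM0 hM1.
apply: divr_ge0; last first.
  apply: mulr_ge0; [apply: mulr_ge0|] => //; try lra.
have h1 : 0 <= e * (M * d - n + (M - 1)) by apply: mulr_ge0 => //; lra.
have h2 : 0 <= (1 / 4%:R - e) * (M - 1) by apply: mulr_ge0; lra.
lra.
Qed.

Lemma win_gt0 (a : action m K) i : 0 < win_prob (Pe j e) a i.
Proof.
apply: lt_le_trans (win_lb a i); rewrite invr_gt0; apply: mulr_gt0 => //.
by have := hMgt1; lra.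
Qed.

Lemma kl_w (w : R) : (2%:R * M)^-1 <= w ->
  (w - M^-1) - 2%:R * M * (w - M^-1) ^+ 2 <= M^-1 * ln (M * w).
Proof.
move=> hlb.
have hM := hMgt1.
have hMp : 0 < M by lra.
have hw : 0 < w.
  apply: lt_le_trans hlb; rewrite invr_gt0; apply: mulr_gt0 => //; lra.
have hl := ln_ge (mulr_gt0 hMp hw).
apply: le_trans (_ : M^-1 * (1 - (M * w)^-1) <= _); last first.
  by rewrite ler_pM2l // invr_gt0.
rewrite -subr_ge0.
have -> : M^-1 * (1 - (M * w)^-1) - (w - M^-1 - 2%:R * M * (w - M^-1) ^+ 2) =
   (w - M^-1) ^+ 2 * (2%:R * M - w^-1).
  by field; rewrite hM0 andbT; apply: lt0r_neq0.
apply: mulr_ge0; first exact: sqr_ge0.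
rewrite subr_ge0.
rewrite -[2%:R * M]invrK lef_pV2 ?posrE ?invr_gt0 //; apply: mulr_gt0 => //; lra.
Qed.

Lemma delta_eq (a : action m K) i :
  win_prob (Pe j e) a i - M^-1 = (2%:R * e / (M * (M - 1))) * (M * dI j (a i) - cnt j a).
Proof. by rewrite win_Pe // addrC addKr mulrAC. Qed.

Lemma y2_le (a : action m K) i :
  (M * dI j (a i) - cnt j a) ^+ 2 <= M ^+ 2 * dI j (a i) + M * cnt j a.
Proof.
have hn0 := cnt_ge0 a; have hnM := cnt_le a.
set n := cnt j a in hn0 hnM *; clearbody n.
have h1 : 0 <= n * (M - n) by apply: mulr_ge0 => //; lra.
have hM := hMgt1.
have h2 : 0 <= M * n by apply: mulr_ge0 => //; lra.
case: (dI01 j (a i)) => ->.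
  rewrite !mulr0 !add0r ?sub0r sqrrN expr2; lra.
rewrite mulr1 mulr1 expr2 expr2; lra.
Qed.

Lemma kl_sum (a : action m K) :
  - (64%:R * e ^+ 2 * cnt j a / M) <= \sum_i M^-1 * ln (M * win_prob (Pe j e) a i).
Proof.
set C := 2%:R * e / (M * (M - 1)).
have hM := hMgt1.
have hC : 0 <= C ^+ 2 by exact: sqr_ge0.
apply: le_trans (ler_sum _ (fun i _ => kl_w (win_lb a i))).
apply: le_trans (_ : \sum_i ((win_prob (Pe j e) a i - M^-1) -
     2%:R * M * (C ^+ 2 * (M ^+ 2 * dI j (a i) + M * cnt j a))) <= _); last first.
  apply: ler_sum => i _; rewrite lerD2l lerN2; apply: ler_wpM2l.
    by apply: mulr_ge0 => //; lra.
  by rewrite delta_eq exprMn -/C; apply: ler_wpM2l => //; exact: y2_le.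
rewrite sumrB.
have -> : \sum_i (win_prob (Pe j e) a i - M^-1) = 0.
  rewrite sumrB win_sum1 sumr_const card_ord.
  have -> : M^-1 *+ m = M * M^-1 by rewrite mulr_natl.
  by rewrite mulfV ?subrr //; exact: hM0.
have -> : \sum_i 2%:R * M * (C ^+ 2 * (M ^+ 2 * dI j (a i) + M * cnt j a)) =
    2%:R * M * (C ^+ 2 * (M ^+ 2 * cnt j a + M * (M * cnt j a))).
  rewrite -mulr_sumr -mulr_sumr big_split /= -mulr_sumr sumr_const card_ord.
  by rewrite -/(cnt j a) -[m%:R * cnt j a *+ m]mulr_natl.
have hn := cnt_ge0 a.
rewrite sub0r lerN2 /C.
rewrite -subr_ge0.
have -> : 64%:R * e ^+ 2 * cnt j a / M -
   2%:R * M * ((2%:R * e / (M * (M - 1))) ^+ 2 * (M ^+ 2 * cnt j a + M * (M * cnt j a))) =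
   16%:R * e ^+ 2 * cnt j a * ((3%:R * M - 2%:R) * (M - 2%:R)) / (M * (M - 1) ^+ 2).
  by field; rewrite hM0 hM1.
have h2 := hM2.
apply: divr_ge0; last by apply: mulr_ge0; [lra|exact: sqr_ge0].
apply: mulr_ge0; first by apply: mulr_ge0 => //; apply: mulr_ge0; [lra|exact: sqr_ge0].
apply: mulr_ge0; lra.
Qed.
End Inst.

Lemma Pe_pref K (j : 'I_K) e : 0 <= e -> e <= 1 / 4%:R -> is_pref_matrix (Pe j e).
Proof.
move=> h0 h1; split; [|split].
- move=> i k; rewrite /Pe; case: (dI01 j i) => ->; case: (dI01 j k) => ->;
  rewrite ?subrr ?mulr0 ?addr0 ?sub0r ?subr0 ?mulr1 ?mulrN1; apply/andP; split; lra.
- by move=> i k; rewrite /Pe; field.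
- by move=> i; rewrite /Pe subrr mulr0 addr0.
Qed.

Lemma Pe_star K (j : 'I_K) e i : 0 <= e -> 1 / 2%:R <= Pe j e j i.
Proof.
move=> h0; rewrite /Pe lerDl; apply: mulr_ge0 => //.
have -> : dI j j = 1 by rewrite /dI eqxx.
by rewrite subr_ge0 dI_le1.
Qed.

Lemma sum_dI K (x : 'I_K) : \sum_j dI j x = 1.
Proof.
rewrite (bigD1 x) //= /dI eqxx big1 ?addr0 // => k hk.
by rewrite eq_sym (negbTE hk).
Qed.

Lemma win_P0 m K (k0 : 'I_K) (a : action m K) i : (2 <= m)%N ->
  win_prob (Pe k0 0) a i = m%:R^-1.
Proof. by move=> hm; rewrite win_Pe // mulr0 mul0r mul0r addr0. Qed.

Section Main.
Variables (m K T : nat) (pol : policy m K).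
Local Notation M := (m%:R : R).

Definition NN (j : 'I_K) (tr : trajectory m K T) : R := \sum_t cnt j (tr t).1.

Lemma regret_eq (j : 'I_K) e tr : (2 <= m)%N ->
  condorcet_regret (fun _ => Pe j e) j tr = e * T%:R - e / M * NN j tr.
Proof.
move=> hm; rewrite /condorcet_regret /NN.
have hM0 := hM0 hm.
rewrite (eq_bigr (fun t => e - e / M * cnt j (tr t).1)); last first.
  move=> t _.
  rewrite (eq_bigr (fun s => e - e * dI j ((tr t).1 s))); last first.
    by move=> s _; rewrite /Pe (_ : dI j j = 1) ?/dI ?eqxx //; field.
  rewrite sumrB sumr_const card_ord -mulr_sumr -/(cnt j (tr t).1).
  have -> : e *+ m = M * e by rewrite mulr_natl.
  by field.
by rewrite sumrB sumr_const card_ord -mulr_sumr mulr_natr.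
Qed.

Lemma mu_ratio (j k0 : 'I_K) e tr : (2 <= m)%N ->
  traj_prob pol (fun _ => Pe j e) tr =
  traj_prob pol (fun _ => Pe k0 0) tr * \prod_(t < T) (M * win_prob (Pe j e) (tr t).1 (tr t).2).
Proof.
move=> hm; have hM0 := hM0 hm.
rewrite /traj_prob -big_split; apply: eq_bigr => t _ /=; rewrite win_P0 //; by field.
Qed.

Lemma NN_ge0 j tr : 0 <= NN j tr.
Proof. by apply: sumr_ge0 => t _; exact: cnt_ge0. Qed.

Lemma NN_le j tr : NN j tr <= M * T%:R.
Proof.
rewrite /NN (le_trans (ler_sum _ (fun t _ => cnt_le j (tr t).1))) //.
by rewrite sumr_const card_ord mulr_natr.
Qed.

Lemma sum_NN tr : \sum_j NN j tr = M * T%:R.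
Proof.
rewrite /NN exchange_big /=.
rewrite (eq_bigr (fun _ => M)); first by rewrite sumr_const card_ord mulr_natr.
move=> t _; rewrite /cnt exchange_big /=.
rewrite (eq_bigr (fun _ => 1)); first by rewrite sumr_const card_ord.
by move=> s _; rewrite sum_dI.
Qed.
End Main.

Lemma traj_prob_ge0 m K T (pol : policy m K) (Ps : 'I_T -> pref K) tr :
  valid_policy pol -> (forall t (a : action m K) i, 0 <= win_prob (Ps t) a i) -> 0 <= traj_prob pol Ps tr.
Proof.
move=> hp hw; apply: prodr_ge0 => t _; apply: mulr_ge0 => //.
exact: (proj1 (hp _)).
Qed.

Theorem theorem2 :
  exists c : R, 0 < c /\
  forall (m K T : nat), (2 <= m)%N -> (m <= K)%N -> (4 <= K)%N -> (K <= T)%N ->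
  forall pol : policy m K, valid_policy pol ->
  exists (Ps : 'I_T -> pref K) (astar : 'I_K),
    (forall t, is_pref_matrix (Ps t)) /\
    (forall t i, 1 / 2%:R <= Ps t astar i) /\
    c * Num.sqrt (K * T)%:R <= expected_regret pol Ps astar.
Proof.
exists (1 / 128%:R); split; first by rewrite divr_gt0 // ltr0n.
move=> m K T hm hmK hK hKT pol hpol.
have hK0 : (0 < K)%N by rewrite (leq_trans _ hK).
have hT0 : (0 < T)%N by rewrite (leq_trans hK0 hKT).
pose k0 : 'I_K := Ordinal hK0.
pose M : R := m%:R.
have hM := hMgt1 hm.
have hM0 : M != 0 by exact: hM0.
have hTR : 1 <= (T%:R : R) by rewrite ler1n.
have hKR : 4%:R <= (K%:R : R) by rewrite ler_nat.
have hKT' : (K%:R : R) <= T%:R by rewrite ler_nat.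
pose mu0 tr := traj_prob pol (fun _ : 'I_T => Pe k0 0) tr.
have hsum0 : \sum_tr mu0 tr = 1.
  by apply: traj_sum1 => // t a; exact: win_sum1.
have hmu0 : forall tr, 0 <= mu0 tr.
  move=> tr; apply: traj_prob_ge0 => // t a i; rewrite win_P0 // invr_ge0; lra.
pose F j := \sum_tr mu0 tr * NN j tr.
have [j _ hj] := @arg_minP _ R _ k0 xpredT F isT.
have hFj : F j * K%:R <= M * T%:R.
  have hs : \sum_k F k = M * T%:R.
    rewrite /F exchange_big /=.
    rewrite (eq_bigr (fun tr => mu0 tr * (M * T%:R))); last first.
      by move=> tr _; rewrite -mulr_sumr sum_NN.
    by rewrite -mulr_suml hsum0 mul1r.
  apply: le_trans (_ : \sum_(k < K) F j <= _); first by rewrite sumr_const card_ord mulr_natr.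
  by rewrite -hs; apply: ler_sum => k _; exact: hj.
pose e := Num.sqrt ((K * T)%:R : R) / (16%:R * T%:R).
have hsq : Num.sqrt ((K * T)%:R : R) ^+ 2 = (K * T)%:R by rewrite sqr_sqrtr // ler0n.
have hT0' : (T%:R : R) != 0 by rewrite pnatr_eq0 -lt0n.
have he0 : 0 <= e by rewrite divr_ge0 ?sqrtr_ge0 //; lra.
have he2 : e ^+ 2 = K%:R / (256%:R * T%:R).
  by rewrite expr_div_n hsq natrM; field.
have he1 : e <= 1 / 4%:R.
  have h : e ^+ 2 <= 1 / 16%:R.
    rewrite he2 ler_pdivrMr; last by apply: mulr_gt0; lra.
    lra.
  rewrite expr2 in h; nra.
exists (fun _ => Pe j e), j; split; first by move=> t; apply: Pe_pref.
split; first by move=> t i; apply: Pe_star.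
rewrite /expected_regret.
pose muj tr := traj_prob pol (fun _ : 'I_T => Pe j e) tr.
have hsumj : \sum_tr muj tr = 1.
  by apply: traj_sum1 => // t a; exact: win_sum1.
have hmuj : forall tr, 0 <= muj tr.
  move=> tr; apply: traj_prob_ge0 => // t a i; apply: ltW; exact: win_gt0.
pose f (tr : trajectory m K T) := NN j tr / (M * T%:R).
have hMT : 0 < M * T%:R by apply: mulr_gt0; lra.
have hf0 : forall tr, 0 <= f tr by move=> tr; apply: divr_ge0; [exact: NN_ge0|lra].
have hf1 : forall tr, f tr <= 1.
  by move=> tr; rewrite ler_pdivrMr // mul1r; exact: NN_le.
pose r := \sum_tr muj tr * (1 - f tr).
have hreg : \sum_tr muj tr * condorcet_regret (fun _ => Pe j e) j tr = e * T%:R * r.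
  rewrite /r mulr_sumr; apply: eq_bigr => tr _; rewrite regret_eq // /f /muj; field.
  by rewrite hM0 hT0'.
rewrite hreg.
suff hr : 1 / 8%:R <= r.
  have -> : e * T%:R = Num.sqrt (K * T)%:R / 16%:R by rewrite /e; field.
  rewrite -subr_ge0.
  have -> : Num.sqrt (K * T)%:R / 16%:R * r - 1 / 128%:R * Num.sqrt (K * T)%:R =
     Num.sqrt (K * T)%:R / 16%:R * (r - 1 / 8%:R) by field.
  by apply: mulr_ge0; [apply: divr_ge0; rewrite ?sqrtr_ge0 //|]; lra.
pose hh (tr : trajectory m K T) := 2%:R - f tr.
pose Z := \sum_tr muj tr * hh tr.
have hr0 : 0 <= r.
  by apply: sumr_ge0 => tr _; apply: mulr_ge0 => //; rewrite subr_ge0.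
have hZ : Z = 1 + r.
  rewrite /Z /r -{1}hsumj -big_split; apply: eq_bigr => tr _ /=; rewrite /hh; ring.
have hZp : 0 < Z by rewrite hZ; lra.
pose G (a : action m K) (i : 'I_m) := ln (M * win_prob (Pe j e) a i).
have hgibbs : forall tr, mu0 tr * (\sum_t G (tr t).1 (tr t).2 + ln (hh tr) - ln Z)
                         <= muj tr * hh tr / Z - mu0 tr.
  move=> tr.
  have hwp : forall t, 0 < M * win_prob (Pe j e) (tr t).1 (tr t).2.
    by move=> t; apply: mulr_gt0; [lra|exact: win_gt0].
  have hrho : 0 < \prod_t (M * win_prob (Pe j e) (tr t).1 (tr t).2).
    by apply: prodr_gt0 => t _; exact: hwp.
  have hhh : 0 < hh tr by rewrite /hh; have := hf1 tr; lra.
  have e1 : \sum_t G (tr t).1 (tr t).2 + ln (hh tr) - ln Z =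
     ln (\prod_t (M * win_prob (Pe j e) (tr t).1 (tr t).2) * hh tr / Z).
    rewrite ln_mulR ?mulr_gt0 ?invr_gt0 // ln_mulR // ln_invR // ln_prod //.
  rewrite e1 /muj (mu_ratio pol j k0 e tr hm) -/(mu0 tr).
  set P := \prod_(t < T) (M * win_prob (Pe j e) (tr t).1 (tr t).2).
  set y := P * hh tr / Z.
  have hy : 0 < y by rewrite /y; apply: mulr_gt0; [apply: mulr_gt0|rewrite invr_gt0].
  apply: le_trans (_ : mu0 tr * (y - 1) <= _).
    by apply: ler_wpM2l => //; exact: ln_le_sub1.
  have -> : mu0 tr * P * hh tr / Z - mu0 tr = mu0 tr * (y - 1) by rewrite /y; field; apply: lt0r_neq0.
  done.
have hsumg : \sum_tr mu0 tr * (\sum_t G (tr t).1 (tr t).2 + ln (hh tr) - ln Z) <= 0.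
  apply: le_trans (ler_sum _ (fun tr _ => hgibbs tr)) _.
  rewrite sumrB hsum0 -mulr_suml -/Z divff ?subrr //; exact: lt0r_neq0.
pose SA := \sum_tr mu0 tr * \sum_t G (tr t).1 (tr t).2.
pose SB := \sum_tr mu0 tr * ln (hh tr).
have hsplit : \sum_tr mu0 tr * (\sum_t G (tr t).1 (tr t).2 + ln (hh tr) - ln Z) =
              SA + SB - ln Z.
  rewrite /SA /SB (eq_bigr (fun tr => mu0 tr * \sum_t G (tr t).1 (tr t).2 + mu0 tr * ln (hh tr) - mu0 tr * ln Z)); last by move=> tr _; ring.
  by rewrite sumrB big_split /= -mulr_suml hsum0 mul1r.
have hlnZ : ln Z <= r by have := ln_le_sub1 hZp; rewrite hZ; lra.
have hFj0 : 0 <= F j.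
  by apply: sumr_ge0 => tr _; apply: mulr_ge0 => //; exact: NN_ge0.
have hSA : - (1 / 4%:R) <= SA.
  rewrite /SA (@tower m K pol hpol T (fun _ => Pe k0 0) G); last first.
    by move=> t a; exact: win_sum1.
  pose c := - (64%:R * e ^+ 2 / M).
  apply: le_trans (_ : \sum_tr mu0 tr * \sum_t c * cnt j (tr t).1 <= _); last first.
    apply: ler_sum => tr _; apply: ler_wpM2l => //; apply: ler_sum => t _.
    rewrite (eq_bigr (fun i => M^-1 * ln (M * win_prob (Pe j e) (tr t).1 i))); last first.
      by move=> i _; rewrite win_P0.
    have := @kl_sum m K j e hm he0 he1 (tr t).1.
    by rewrite /c mulNr mulrAC.
  have -> : \sum_tr mu0 tr * \sum_t c * cnt j (tr t).1 = c * F j.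
    rewrite /F mulr_sumr; apply: eq_bigr => tr _; rewrite -mulr_sumr /NN; ring.
  have h : 64%:R * e ^+ 2 / M * F j <= 1 / 4%:R.
    rewrite he2.
    have -> : 64%:R * (K%:R / (256%:R * T%:R)) / M * F j = (F j * K%:R) / (4%:R * T%:R * M).
      by field; rewrite hT0' hM0.
    rewrite ler_pdivrMr; last by apply: mulr_gt0; lra.
    lra.
  rewrite /c mulNr; lra.
have hSB : 3%:R / 8%:R <= SB.
  apply: le_trans (_ : \sum_tr mu0 tr * ((1 - f tr) / 2%:R) <= _); last first.
    apply: ler_sum => tr _; apply: ler_wpM2l => //.
    have hf0' := hf0 tr; have hf1' := hf1 tr.
    have hhp : 0 < hh tr by rewrite /hh; lra.
    apply: le_trans (ln_ge hhp).
    rewrite -subr_ge0.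
    have -> : 1 - (hh tr)^-1 - (1 - f tr) / 2%:R = (1 - f tr) * f tr / (2%:R * hh tr).
      by rewrite /hh; field; rewrite -/(hh tr); apply: lt0r_neq0.
    apply: divr_ge0; last by lra.
    by apply: mulr_ge0 => //; lra.
  have hFf : \sum_tr mu0 tr * f tr = F j / (M * T%:R).
    by rewrite /F mulr_suml; apply: eq_bigr => tr _; rewrite /f mulrA.
  rewrite (eq_bigr (fun tr => 2%:R^-1 * mu0 tr - 2%:R^-1 * (mu0 tr * f tr))); last first.
    by move=> tr _; field.
  rewrite sumrB -!mulr_sumr hsum0 hFf.
  have h : F j / (M * T%:R) <= 1 / 4%:R.
    rewrite ler_pdivrMr //.
    have : 0 <= F j * (K%:R - 4%:R) by apply: mulr_ge0 => //; lra.
    lra.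
  lra.
lra.
Qed.
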